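(* The function $f(t) = t^{-1}(1-e^t)\log(1-e^{-t})$ is a strictly decreasing bijection from $\mathbb{R}^+ = (0,\infty)$ onto $\mathbb{R}^+$. *)

(* Defs.v *)
From Stdlib Require Import Reals.
Open Scope R_scope.

Definition fact_f (t : R) : R := / t * (1 - exp t) * ln (1 - exp (- t)).

(* Main.v *)
Require Import Defs.
From Stdlib Require Import Reals Lra.
From Stdlib Require Ranalysis5.
From Coquelicot Require Import Coquelicot.
Open Scope R_scope.

Lemma ln_lt_pred (z : R) : 0 < z -> z <> 1 -> ln z < z - 1.
Proof.
  intros Hz H1.
  assert (H : z < exp (z - 1)) by (pose proof (exp_ineq1 (z-1)); lra).
  rewrite <- (ln_exp (z-1)). apply ln_increasing; auto.
Qed.

Lemma L_gt (u : R) : 0 < u < 1 -> u < - ln (1 - u).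
Proof. intros H. pose proof (ln_lt_pred (1-u)). lra. Qed.

Lemma L_lt (u : R) : 0 < u < 1 -> - ln (1 - u) * (1 - u) < u.
Proof.
  intros H.
  assert (H1 : ln (/ (1-u)) < / (1-u) - 1).
  { apply ln_lt_pred. apply Rinv_0_lt_compat; lra.
    intro E. assert (1 - u = 1). { rewrite <- (Rinv_inv (1-u)), E. lra. } lra. }
  rewrite ln_Rinv in H1 by lra.
  assert (E : / (1 - u) - 1 = u * / (1-u)) by (field; lra).
  rewrite E in H1.
  apply Rmult_lt_reg_r with (/ (1-u)). apply Rinv_0_lt_compat; lra.
  replace (- ln (1 - u) * (1 - u) * / (1 - u)) with (- ln (1-u)) by (field; lra).
  lra.
Qed.

Lemma L_incr (u v : R) : 0 < u -> u < v -> v < 1 ->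
  - ln (1 - u) * v < - ln (1 - v) * u.
Proof.
  intros Hu Huv Hv.
  set (w := (1 - v) / (1 - u)).
  assert (Hw : 0 < w) by (unfold w; apply Rdiv_lt_0_compat; lra).
  assert (Ew : 1 - v = (1 - u) * w) by (unfold w; field; lra).
  assert (Hw1 : w - 1 = - ((v - u) / (1 - u))) by (unfold w; field; lra).
  assert (Hlw : ln w < w - 1).
  { apply ln_lt_pred; auto. intro E. rewrite E in Ew. lra. }
  rewrite Ew, ln_mult by lra.
  pose proof (L_lt u ltac:(lra)) as HL.
  set (L := - ln (1 - u)) in *.
  assert (Hq : (v - u) / (1 - u) * (1 - u) = v - u) by (field; lra).
  assert (HLq : L * (v - u) < (v - u) / (1 - u) * u).
  { apply Rmult_lt_reg_r with (1 - u). lra.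
    replace ((v - u) / (1 - u) * u * (1 - u)) with (u * (v - u)) by (field; lra).
    nra. }
  replace (- (ln (1 - u) + ln w) * u) with (L * u + (- ln w) * u) by (unfold L; ring).
  assert (- ln w * u > (v - u) / (1 - u) * u) by nra.
  nra.
Qed.

Lemma A_decr (s t : R) : 0 < s -> s < t ->
  s * (1 - exp (- t)) < t * (1 - exp (- s)).
Proof.
  intros Hs Hst.
  set (d := t - s).
  assert (Et : exp (- t) = exp (- s) * exp (- d)).
  { rewrite <- exp_plus. f_equal. unfold d. ring. }
  set (e := exp (- s)) in *. set (ed := exp (- d)) in *.
  assert (He : 0 < e) by apply exp_pos.
  assert (Hed : 1 - ed < d) by (pose proof (exp_ineq1 (- d)); unfold ed, d in *; lra).
  assert (Hse : s * e <= 1 - e).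
  { assert (E1 : e * exp s = 1) by (unfold e; rewrite <- exp_plus;
      replace (- s + s) with 0 by ring; apply exp_0).
    pose proof (exp_ineq1_le s). nra. }
  rewrite Et. replace t with (s + d) by (unfold d; ring).
  assert (Hd : 0 < d) by (unfold d; lra).
  assert (s * e * (1 - ed) < s * e * d) by (apply Rmult_lt_compat_l; nra).
  nra.
Qed.

Definition Afun (t : R) := (1 - exp (- t)) / t.
Definition Bfun (t : R) := - ln (1 - exp (- t)) / exp (- t).

Lemma exp_neg_lt1 (t : R) : 0 < t -> 0 < exp (- t) < 1.
Proof.
  intros Ht. split. apply exp_pos. rewrite <- exp_0. apply exp_increasing. lra.
Qed.

Lemma f_eq (t : R) : 0 < t -> fact_f t = Afun t * Bfun t.
Proof.
  intros Ht. unfold fact_f, Afun, Bfun.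
  assert (E : exp t * exp (- t) = 1) by (rewrite <- exp_plus;
      replace (t + - t) with 0 by ring; apply exp_0).
  pose proof (exp_pos (- t)).
  replace (exp t) with (/ exp (- t)) by (field_simplify_eq; lra).
  field. lra.
Qed.

Lemma A_pos (t : R) : 0 < t -> 0 < Afun t.
Proof. intros. pose proof (exp_neg_lt1 t H). unfold Afun. apply Rdiv_lt_0_compat; lra. Qed.

Lemma B_pos (t : R) : 0 < t -> 0 < Bfun t.
Proof.
  intros. pose proof (exp_neg_lt1 t H). pose proof (L_gt _ H0).
  unfold Bfun. apply Rdiv_lt_0_compat; lra.
Qed.

Lemma frac_lt (a b u v : R) : 0 < u -> 0 < v -> a * v < b * u -> a / u < b / v.
Proof.
  intros Hu Hv H. apply Rmult_lt_reg_r with (u * v). nra.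
  replace (a / u * (u * v)) with (a * v) by (field; lra).
  replace (b / v * (u * v)) with (b * u) by (field; lra). lra.
Qed.

Lemma A_lt (s t : R) : 0 < s -> s < t -> Afun t < Afun s.
Proof. intros. unfold Afun. apply frac_lt; try lra. pose proof (A_decr s t H H0). lra. Qed.

Lemma B_lt (s t : R) : 0 < s -> s < t -> Bfun t < Bfun s.
Proof.
  intros. unfold Bfun. pose proof (exp_neg_lt1 s H). pose proof (exp_neg_lt1 t ltac:(lra)).
  assert (exp (- t) < exp (- s)) by (apply exp_increasing; lra).
  apply frac_lt; try lra. apply L_incr; lra.
Qed.

Lemma f_cont (t : R) : 0 < t -> continuity_pt fact_f t.
Proof.
  intros Ht. apply continuity_pt_filterlim. apply (ex_derive_continuous (K:=R_AbsRing) (V:=R_NormedModule)).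
  unfold fact_f. pose proof (exp_neg_lt1 t Ht).
  auto_derive. repeat split; lra.
Qed.

Theorem fact2p3 :
  (* strictly decreasing on (0, oo) *)
  (forall s t : R, 0 < s -> s < t -> fact_f t < fact_f s) /\
  (* maps (0, oo) into (0, oo) *)
  (forall t : R, 0 < t -> 0 < fact_f t) /\
  (* onto (0, oo) *)
  (forall y : R, 0 < y -> exists t : R, 0 < t /\ fact_f t = y).
Proof.
  split; [|split].
  - intros s t Hs Hst. rewrite (f_eq s Hs), (f_eq t ltac:(lra)).
    pose proof (A_lt s t Hs Hst). pose proof (B_lt s t Hs Hst).
    pose proof (A_pos t ltac:(lra)). pose proof (B_pos t ltac:(lra)). nra.
  - intros t Ht. rewrite (f_eq t Ht). pose proof (A_pos t Ht). pose proof (B_pos t Ht). nra.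
  - intros y Hy.
    set (t1 := exp (- y) / 2). set (t2 := 1 + 2 / y).
    assert (Hey : 0 < exp (- y) < 1) by (apply exp_neg_lt1; lra).
    assert (Ht1 : 0 < t1 < 1/2) by (unfold t1; lra).
    assert (Ht2 : 1 < t2) by (unfold t2; assert (0 < 2 / y) by (apply Rdiv_lt_0_compat; lra); lra).
    assert (F1 : y < fact_f t1).
    { rewrite (f_eq t1 ltac:(lra)). unfold Afun, Bfun.
      pose proof (exp_neg_lt1 t1 ltac:(lra)) as Hx.
      set (x := exp (- t1)) in *.
      assert (Hxlow : 1 - t1 <= x) by (pose proof (exp_ineq1_le (- t1)); unfold x; lra).
      assert (HA : x <= (1 - x) / t1).
      { apply Rmult_le_reg_r with t1. lra.
        replace ((1 - x) / t1 * t1) with (1 - x) by (field; lra).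
        assert (E1 : x * exp t1 = 1) by (unfold x; rewrite <- exp_plus;
          replace (- t1 + t1) with 0 by ring; apply exp_0).
        pose proof (exp_ineq1_le t1). nra. }
      assert (HL : y < - ln (1 - x)).
      { assert (1 - x < exp (- y)) by (unfold t1 in Hxlow; lra).
        assert (ln (1 - x) < - y).
        { rewrite <- (ln_exp (- y)). apply ln_increasing; lra. }
        lra. }
      pose proof (L_gt x Hx).
      assert (Eb : - ln (1 - x) / x * x = - ln (1 - x)) by (field; lra).
      assert (0 < - ln (1 - x) / x) by (apply Rdiv_lt_0_compat; lra).
      nra. }
    assert (F2 : fact_f t2 < y).
    { rewrite (f_eq t2 ltac:(lra)). unfold Afun, Bfun.
      pose proof (exp_neg_lt1 t2 ltac:(lra)) as Hx.
      set (x := exp (- t2)) in *.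
      assert (Hxh : x < 1/2).
      { assert (E1 : x * exp t2 = 1) by (unfold x; rewrite <- exp_plus;
          replace (- t2 + t2) with 0 by ring; apply exp_0).
        pose proof (exp_ineq1_le t2). nra. }
      pose proof (L_lt x Hx). pose proof (L_gt x Hx).
      assert (HB : - ln (1 - x) / x < 2).
      { apply Rmult_lt_reg_r with x. lra.
        replace (- ln (1 - x) / x * x) with (- ln (1 - x)) by (field; lra). nra. }
      assert (HA : (1 - x) / t2 < 1 / t2).
      { unfold Rdiv. apply Rmult_lt_compat_r. apply Rinv_0_lt_compat; lra. lra. }
      assert (HA0 : 0 < (1 - x) / t2) by (apply Rdiv_lt_0_compat; lra).
      assert (HB0 : 0 < - ln (1 - x) / x) by (apply Rdiv_lt_0_compat; lra).
      assert (H2 : 2 * (1 / t2) < y).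
      { apply Rmult_lt_reg_r with t2. lra.
        replace (2 * (1 / t2) * t2) with 2 by (field; lra).
        unfold t2. replace (y * (1 + 2 / y)) with (y + 2) by (field; lra). lra. }
      assert ((1 - x) / t2 * (- ln (1 - x) / x) < 1 / t2 * 2) by
        (apply Rmult_le_0_lt_compat; lra).
      lra. }
    destruct (Ranalysis5.IVT_interv (fun t => y - fact_f t) t1 t2) as [z [Hz Ez]].
    + intros a Ha. apply continuity_pt_minus. apply continuity_pt_const. intros ? ?; reflexivity.
      apply f_cont. lra.
    + lra.
    + simpl. lra.
    + simpl. lra.
    + exists z. split; lra.
Qed.
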